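(* For every integer $k\ge 3$ there exist an integer $i$ with $1\le i<k$, a real $t\in[0,1]$ with $i(1-t)=k/2$, and a function $m(v)=\Theta(v^t)$ such that the $k$-uniform hypergraph properties $f_v$ defined by ''$f_v(H)=1$ iff there is $S\subseteq[v]$, $|S|=m(v)$, such that every $k$-subset of $S$ is an edge of $H$ and every edge $E$ of $H$ with $E\not\subseteq S$ satisfies $|E\cap S|<i$'' satisfy $s(f_v)=\Theta(v^{k/2})$. In particular, for every $k\ge 2$ there is a $k$-uniform hypergraph property with $s(f)=\Theta(v^{k/2})=\Theta(\sqrt{n})$, $n=\binom vk$.
   Context: A $k$-uniform hypergraph on $[v]$ is identified with a string in $\{0,1\}^{\binom vk}$. A $k$-uniform hypergraph property is a Boolean function on such strings invariant under all permutations of $[v]$. $s(f,x)$ is the number of coordinates whose flip changes $f(x)$, and $s(f)=\max_x s(f,x)$. Asymptotics are as $v\to\infty$ with $k$ fixed. *)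

(* Defs.v *)
From mathcomp Require Import all_boot.
From mathcomp Require Import fingroup perm.
From Stdlib Require Import Reals.

Set Implicit Arguments.
Unset Strict Implicit.
Unset Printing Implicit Defensive.

Definition ksub (v k : nat) := {A : {set 'I_v} | #|A| == k}.

Definition hgraph (v k : nat) := {ffun ksub v k -> bool}.

(* Image of a k-subset under a permutation of [v]
   (cardinality is preserved, so insubd never uses its default). *)
Definition ksub_map (v k : nat) (s : {perm 'I_v}) (E : ksub v k) : ksub v k :=
  insubd E (s @: val E).

Definition relabel (v k : nat) (s : {perm 'I_v}) (H : hgraph v k) : hgraph v k :=
  [ffun E => H (ksub_map s E)].

Definition is_hproperty (v k : nat) (f : hgraph v k -> bool) : Prop :=
  forall (s : {perm 'I_v}) (H : hgraph v k), f (relabel s H) = f H.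

Definition flip (v k : nat) (H : hgraph v k) (e : ksub v k) : hgraph v k :=
  [ffun E => if E == e then ~~ H E else H E].

Definition sens_at (v k : nat) (f : hgraph v k -> bool) (H : hgraph v k) : nat :=
  #|[set e : ksub v k | f (flip H e) != f H]|.

Definition sens (v k : nat) (f : hgraph v k -> bool) : nat :=
  \max_(H : hgraph v k) sens_at f H.

Definition clique_prop (v k i m : nat) (H : hgraph v k) : bool :=
  [exists S : {set 'I_v},
     (#|S| == m) &&
     [forall E : ksub v k,
        ((val E \subset S) ==> H E) &&
        ((H E && ~~ (val E \subset S)) ==> (#|val E :&: S| < i))]].

Definition bigTheta (g h : nat -> R) : Prop :=
  exists (c1 c2 : R) (N : nat), (0 < c1)%R /\ (0 < c2)%R /\
    forall v : nat, (N <= v)%nat -> (c1 * h v <= g v <= c2 * h v)%R.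

(* Main.v *)
Require Import Defs.
From mathcomp Require Import all_boot.
From mathcomp Require Import fingroup perm.
From mathcomp Require Import zify.
From Stdlib Require Import Reals Lra Lia.
Set Implicit Arguments.
Unset Strict Implicit.
Unset Printing Implicit Defensive.
Local Notation "a ^ b" := (expn a b) : nat_scope.

Lemma ex_sub (T : finType) (Y X : {set T}) n :
  Y \subset X -> #|Y| <= n -> n <= #|X| ->
  exists Z : {set T}, [/\ Y \subset Z, Z \subset X & #|Z| = n].
Proof.
move=> sYX h1.
have [d ->] : exists d, n = #|Y| + d by exists (n - #|Y|); lia.
elim: d => [|d IH] h2.
  by exists Y; rewrite addn0.
have [|Z [sYZ sZX cZ]] := IH; first lia.
have : 0 < #|X :\: Z|.
  have e1 := cardsID Z X; have e2 := subset_leq_card (subsetIr X Z).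
  move: e1 e2 cZ h2; set a := #|X :&: Z|; set b := #|X :\: Z|; set c := #|Z|.
  set x := #|X|; set y := #|Y|. lia.
move/card_gt0P => [z]; rewrite inE => /andP[zZ zX].
exists (z |: Z); split.
- exact: subset_trans sYZ (subsetUr _ _).
- by rewrite subUset sub1set zX sZX.
- by rewrite cardsU1 zZ cZ; lia.
Qed.

Section Core.
Variables (v k i m : nat).
Implicit Types (H G : hgraph v k) (S : {set 'I_v}) (e E : ksub v k).

Definition W H S : bool :=
  (#|S| == m) && [forall E : ksub v k,
        ((val E \subset S) ==> H E) &&
        ((H E && ~~ (val E \subset S)) ==> (#|val E :&: S| < i))].

Lemma clique_propE H : clique_prop i m H = [exists S, W H S].
Proof. by []. Qed.

Lemma cardE E : #|val E| = k.
Proof. by apply/eqP; case: E. Qed.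

Lemma flipE H e E : flip H e E = if E == e then ~~ H E else H E.
Proof. by rewrite ffunE. Qed.

Lemma F1 G S E : W G S -> i <= #|val E :&: S| -> G E = (val E \subset S).
Proof.
case/andP=> _ /forallP /(_ E) /andP [h1 h2] hi.
case sES: (val E \subset S); first by move: h1; rewrite sES.
apply/negbTE/negP => GE; move: h2; by rewrite GE sES /= ltnNge hi.
Qed.

Lemma F2 H e S : i <= k -> W (flip H e) S -> #|val e :&: S| < i -> W H S.
Proof.
move=> ik /andP[cS /forallP hS] he; rewrite /W cS /=; apply/forallP => E.
have := hS E; rewrite flipE; case: eqP => [-> _|//].
have nse : ~~ (val e \subset S).
  apply/negP => /setIidPl eq; by move: he; rewrite eq cardE ltnNge ik.
by rewrite (negbTE nse) he !implybT.
Qed.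

End Core.

Definition pickA (n : nat) (T : finType) (X : {set T}) : {set T} :=
  odflt set0 [pick A : {set T} | (A \subset X) && (#|A| == n)].

Lemma pickAP n (T : finType) (X : {set T}) :
  n <= #|X| -> pickA n X \subset X /\ #|pickA n X| = n.
Proof.
move=> h; rewrite /pickA; case: pickP => [A /andP[s /eqP c] | none] //=.
have [|Z [_ sZ cZ]] := ex_sub (sub0set X) _ h; first by rewrite cards0.
by move: (none Z); rewrite sZ cZ eqxx.
Qed.

Lemma split_sub (T : finType) (A X : {set T}) : A \subset X -> X = A :|: (X :\: A).
Proof. by move=> s; rewrite -{1}(setID X A) (setIidPr s). Qed.

Section Count.
Variables (v k i m : nat).

Lemma count1 (S : {set 'I_v}) :
  #|[set e : ksub v k | i <= #|val e :&: S|]| <= 'C(#|S|, i) * 'C(v, k - i).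
Proof.
set P := [set e : ksub v k | _].
pose g (e : ksub v k) := (pickA i (val e :&: S), val e :\: pickA i (val e :&: S)).
rewrite -(card_in_imset (f:=g) (D:=P)); last first.
  move=> e1 e2; rewrite !inE => h1 h2 [eA eB]; apply: val_inj.
  have [s1 _] := pickAP h1; have [s2 _] := pickAP h2.
  rewrite [LHS](split_sub (subset_trans s1 (subsetIl _ _))).
  change (pickA i (val e1 :&: S) = pickA i (val e2 :&: S)) in eA.
  change (val e1 :\: pickA i (val e1 :&: S) = val e2 :\: pickA i (val e2 :&: S)) in eB.
  by rewrite [RHS](split_sub (subset_trans s2 (subsetIl _ _))) eB eA.
have -> : 'C(v, k - i) = 'C(#|'I_v|, k - i) by rewrite card_ord.
rewrite -cards_draws -card_draws -cardsX.
apply: subset_leq_card; apply/subsetP => x /imsetP [e]; rewrite inE => he ->.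
have [s1 c1] := pickAP he.
rewrite !inE /= c1 eqxx (subset_trans s1 (subsetIr _ _)) /=.
rewrite cardsD (setIidPr (subset_trans s1 (subsetIl _ _))) c1 cardE.
by [].
Qed.

End Count.

Lemma count0 v k i m (Fam : {set ksub v k}) (Sf : ksub v k -> {set 'I_v}) :
  {in Fam, forall e, #|Sf e| = m} ->
  {in Fam &, forall e e', e != e' -> #|Sf e :&: Sf e'| < i} ->
  #|Fam| * 'C(m, i) <= 'C(v, i).
Proof.
move=> hc hI.
pose F e := if e \in Fam then [set A : {set 'I_v} | A \subset Sf e & #|A| == i] else set0.
have disj: forall e e', e != e' -> [disjoint F e & F e'].
  move=> e e' ne; rewrite /F disjoints_subset; apply/subsetP => A.
  case: ifP => he; case: ifP => he'; rewrite !inE //.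
  move=> /andP[s1 /eqP c1]; apply/negP => /andP[s2 /eqP c2].
  have := hI e e' he he' ne.
  have : A \subset Sf e :&: Sf e' by rewrite subsetI s1 s2.
  move/subset_leq_card; rewrite c1; lia.
have := partition_disjoint_bigcup addn (fun=> 1) disj.
rewrite sum1_card => eq1.
have eq2 : \sum_e \sum_(x in F e) 1 = #|Fam| * 'C(m, i).
  rewrite -sum_nat_const [RHS]big_mkcond; apply: eq_bigr => e _.
  rewrite sum1_card /F; case: ifP => // he.
  by rewrite cards_draws hc.
  by rewrite cards0.
rewrite -eq2 -eq1.
have -> : 'C(v, i) = 'C(#|'I_v|, i) by rewrite card_ord.
rewrite -card_draws; apply: subset_leq_card; apply/subsetP => A /bigcupP [e _].
by rewrite /F; case: ifP => _; rewrite !inE ?andbT // => /andP[_ ->].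
Qed.

Lemma pack_geom (T : finType) (i k m : nat) (S S' U : {set T}) :
  0 < i -> i < k -> 4 * k < m -> #|S| = m -> #|S'| = m -> S != S' ->
  i <= #|S :&: S'| -> #|U| <= 2 * k ->
  exists E0 : {set T},
    [/\ #|E0| = k, E0 \subset S', ~~ (E0 \subset S), i <= #|E0 :&: S| &
        ~~ (E0 \subset U)].
Proof.
move=> i0 ik km cS cS' nSS' iD cU.
have [x [A [z [xin Asub Acard zin znU]]]] : exists (x : T) (A : {set T}) (z : T),
    [/\ x \in S' :\: S, A \subset S :&: S', #|A| = i, z \in x |: A & z \notin U].
  case: (boolP ((S :&: S') \subset U)) => hD.
  - have c1 := subset_leq_card hD.
    have c2 : #|S' :\: S| = m - #|S :&: S'| by rewrite cardsD setIC cS'.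
    have c3 : #|U| < #|S' :\: S| by lia.
    have : 0 < #|(S' :\: S) :\: U|.
      have := cardsD (S' :\: S) U; have := subset_leq_card (subsetIr (S' :\: S) U).
      move: c3; set a := #|_ :\: U|; set b := #|_ :&: U|; set c := #|S' :\: S|.
      lia.
    move/card_gt0P => [x]; rewrite in_setD => /andP[xU xin].
    have [|A [_ As Ac]] := ex_sub (sub0set (S :&: S')) _ iD; first by rewrite cards0.
    by exists x, A, x; rewrite setU11 xU.
  - have [z zD zU] := subsetPn hD.
    have [||A [zA As Ac]] := @ex_sub _ [set z] (S :&: S') i _ _ iD.
    + by rewrite sub1set.
    + by rewrite cards1.
    have : S' :\: S != set0.
      rewrite setD_eq0; apply/negP => sub.
      by move: nSS'; rewrite eq_sym eqEcard sub cS cS' leqnn.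
    case/set0Pn => x xin.
    exists x, A, z; split => //.
    by rewrite in_setU1 (subsetP zA) ?set11 ?orbT.
move: xin; rewrite in_setD => /andP[xS xS'].
have xA : x \notin A by apply/negP => /(subsetP Asub); rewrite in_setI (negbTE xS).
have sxA : x |: A \subset S'.
  by rewrite subUset sub1set xS' (subset_trans Asub (subsetIr _ _)).
have [||E0 [sE0 E0S' cE0]] := ex_sub sxA (n := k).
- by rewrite cardsU1 xA Acard; lia.
- by rewrite cS'; lia.
exists E0; split => //.
- apply/negP => /subsetP /(_ x); rewrite (negbTE xS).
  by move=> h; have := h (subsetP sE0 x (setU11 _ _)).
- rewrite -Acard; apply: subset_leq_card; rewrite subsetI (subset_trans Asub (subsetIl _ _)).
  by rewrite (subset_trans (subsetUr _ _) sE0).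
- apply/negP => /subsetP /(_ z (subsetP sE0 z zin)); exact/negP.
Qed.

Lemma pack v k i m (H : hgraph v k) e e' S S' :
  0 < i -> i < k -> 4 * k < m -> ~~ clique_prop i m H -> e != e' ->
  W i m (flip H e) S -> W i m (flip H e') S' -> #|S :&: S'| < i.
Proof.
move=> i0 ik km nH nee WS WS'.
have nW : forall S, ~~ W i m H S.
  by move=> T; apply: contra nH => h; rewrite clique_propE; apply/existsP; exists T.
have ik' : i <= k by apply: ltnW.
have he : i <= #|val e :&: S|.
  rewrite leqNgt; apply/negP => h; by have := nW S; rewrite (F2 ik' WS h).
have he' : i <= #|val e' :&: S'|.
  rewrite leqNgt; apply/negP => h; by have := nW S'; rewrite (F2 ik' WS' h).
have key : forall E, E != e -> E != e' -> i <= #|val E :&: S| -> i <= #|val E :&: S'| ->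
    (val E \subset S) = (val E \subset S').
  move=> E ne ne' h1 h2.
  by rewrite -(F1 WS h1) -(F1 WS' h2) !flipE (negbTE ne) (negbTE ne').
have nSS : S != S'.
  apply/negP => /eqP eqS; move: WS'; rewrite -eqS => WS'.
  have := F1 WS he; have := F1 WS' he.
  rewrite !flipE eqxx; case: eqP => [eqe|_]; first by move: nee; rewrite eqe eqxx.
  by move=> ->; case: (_ \subset _).
have cS : #|S| = m by case/andP: WS => /eqP.
have cS' : #|S'| = m by case/andP: WS' => /eqP.
rewrite ltnNge; apply/negP => iD.
have cU : #|val e :|: val e'| <= 2 * k.
  by rewrite cardsU !cardE; lia.
have [E0 [cE0 E0S' nE0S iE0 nE0U]] := pack_geom i0 ik km cS cS' nSS iD cU.
have cE0' : #|E0| == k by rewrite cE0.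
pose E : ksub v k := exist _ E0 cE0'.
have neE : forall f : ksub v k, val f \subset val e :|: val e' -> E != f.
  move=> f sf; apply/negP => /eqP Ef; move: nE0U; by rewrite -[E0]/(val E) Ef sf.
have := key E (neE e (subsetUl _ _)) (neE e' (subsetUr _ _)) iE0.
rewrite /= (setIidPl E0S') cE0 ik' E0S' (negbTE nE0S).
by move=> /(_ isT).
Qed.

Lemma flipK v k (H : hgraph v k) e : flip (flip H e) e = H.
Proof. by apply/ffunP => E; rewrite !flipE; case: eqP => [->|]; rewrite ?negbK. Qed.

Lemma sens_at_up v k i m (H : hgraph v k) :
  0 < i -> i < k -> 4 * k < m ->
  sens_at (clique_prop i m) H * 'C(m, i) <= 'C(m, i) * 'C(m, i) * 'C(v, k - i) + 'C(v, i).
Proof.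
move=> i0 ik km; have ik' : i <= k by apply: ltnW.
case hH: (clique_prop i m H).
- move: hH; rewrite clique_propE => /existsP [S WS].
  have cS : #|S| = m by case/andP: WS => /eqP.
  have : sens_at (clique_prop i m) H <= 'C(m, i) * 'C(v, k - i).
    rewrite -[X in 'C(X, i)]cS; apply: leq_trans (count1 k i S); apply: subset_leq_card.
    apply/subsetP => e; rewrite !inE; apply: contraR; rewrite -ltnNge => h.
    have W' : W i m (flip H e) S by apply: (F2 (e := e)) => //; rewrite flipK.
    have h1 : clique_prop i m (flip H e) by rewrite clique_propE; apply/existsP; exists S.
    have h2 : clique_prop i m H by rewrite clique_propE; apply/existsP; exists S.
    by rewrite h1 h2.
  move=> h; apply: leq_trans (leq_addr _ _).
  by rewrite mulnC -mulnA leq_mul2l h orbT.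
- apply: leq_trans (leq_addl _ _).
  pose Sf (e : ksub v k) := odflt set0 [pick S | W i m (flip H e) S].
  have SfP : forall e, clique_prop i m (flip H e) -> W i m (flip H e) (Sf e).
    move=> e; rewrite clique_propE /Sf => /existsP [S WS].
    by case: pickP => [T //|/(_ S)]; rewrite WS.
  rewrite /sens_at; apply: (count0 (Sf := Sf)).
  + move=> e; rewrite inE hH => h.
    have h1 : clique_prop i m (flip H e) by move: h; case: (clique_prop _ _ _).
    have := SfP e h1; case/andP => /eqP c _; exact: c.
  + move=> e e'; rewrite !inE hH => h h' ne.
    have h1 : clique_prop i m (flip H e) by move: h; case: (clique_prop _ _ _).
    have h2 : clique_prop i m (flip H e') by move: h'; case: (clique_prop _ _ _).
    apply: (pack (H := H) i0 ik km _ ne (SfP e h1) (SfP e' h2)).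
    by rewrite hH.
Qed.

Section Lower.
Variables (v k i m : nat) (S0 : {set 'I_v}).
Hypotheses (i0 : 0 < i) (ik : i < k) (km : k + 2 <= m) (cS0 : #|S0| = m).

Definition H0 : hgraph v k := [ffun E : ksub v k => val E \subset S0].

Lemma H0_sens e : i <= #|val e :&: S0| -> clique_prop i m (flip H0 e) = false.
Proof.
move=> he; apply/negbTE; rewrite clique_propE; apply/existsP => [[S WS]].
have cS : #|S| = m by case/andP: WS => /eqP.
have sub : S \subset S0.
  apply/subsetP => x xS; apply/negPn/negP => xS0.
  have : 0 < #|(S :\: val e) :\: [set x]|.
    have c1 : #|S :\: val e| >= m - k.
      rewrite cardsD cS; have := subset_leq_card (subsetIr S (val e)); rewrite cardE.
      set a := #|_|; lia.
    have := cardsD (S :\: val e) [set x].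
    have := subset_leq_card (subsetIr (S :\: val e) [set x]); rewrite cards1.
    move: c1; set a := #|S :\: val e|; set b := #|_ :\: [set x]|; set c := #|_ :&: _|.
    lia.
  move/card_gt0P => [y]; rewrite !inE => /andP[yx /andP[ye yS]].
  have sxy : [set x; y] \subset S by rewrite subUset !sub1set xS yS.
  have [||E0 [sE0 E0S cE0]] := ex_sub sxy (n := k).
  + by rewrite cards2 eq_sym yx; lia.
  + by rewrite cS; lia.
  have cE0' : #|E0| == k by rewrite cE0.
  pose E : ksub v k := exist _ E0 cE0'.
  have nEe : E != e.
    apply/negP => /eqP Ee; have := subsetP sE0 y; rewrite !inE eqxx orbT => /(_ isT).
    by rewrite -[E0]/(val E) Ee (negbTE ye).
  have /andP[_ /forallP hW] := WS; have /andP[h1 _] := hW E.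
  move: h1; rewrite /= E0S flipE (negbTE nEe) /H0 ffunE /= => /subsetP /(_ x).
  have xE0 : x \in E0 by apply: (subsetP sE0); rewrite !inE eqxx.
  by move=> h; move: xS0; rewrite h.
have eqS : S = S0 by apply/eqP; rewrite eqEcard sub cS cS0 leqnn.
have := F1 WS (E := e); rewrite eqS => /(_ he).
by rewrite flipE eqxx /H0 ffunE; case: (_ \subset _).
Qed.

Lemma H0_W : clique_prop i m H0.
Proof.
rewrite clique_propE; apply/existsP; exists S0; rewrite /W cS0 eqxx /=.
apply/forallP => E; rewrite /H0 ffunE.
by case: (_ \subset _).
Qed.

Lemma count2 :
  'C(m, i) * 'C(v - m, k - i) <= #|[set e : ksub v k | i <= #|val e :&: S0|]|.
Proof.
have cC : #|~: S0| = v - m by rewrite cardsCs setCK card_ord cS0.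
rewrite -cC -cS0 -!cards_draws -cardsX.
set D := setX _ _.
have inj : {in D &, injective (fun p : {set 'I_v} * {set 'I_v} => p.1 :|: p.2)}.
  move=> [A B] [A' B']; rewrite !inE /= => /andP[/andP[sA _] /andP[sB _]].
  move=> /andP[/andP[sA' _] /andP[sB' _]] eq.
  have eA : forall X Y : {set 'I_v}, X \subset S0 -> Y \subset ~: S0 -> (X :|: Y) :&: S0 = X.
    move=> X Y sX sY; rewrite setIUl (setIidPl sX).
    have -> : Y :&: S0 = set0.
      by apply/setP => z; rewrite !inE; apply/negP => /andP[zY zS];
        move: (subsetP sY z zY); rewrite inE zS.
    by rewrite setU0.
  have eB : forall X Y : {set 'I_v}, X \subset S0 -> Y \subset ~: S0 -> (X :|: Y) :&: ~: S0 = Y.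
    move=> X Y sX sY; rewrite setIUl (setIidPl sY).
    have -> : X :&: ~: S0 = set0.
      by apply/setP => z; rewrite !inE; apply/negP => /andP[zX zS];
        move: zS; rewrite (subsetP sX z zX).
    by rewrite set0U.
  have h1 := eA A B sA sB; have h2 := eB A B sA sB.
  rewrite eq eA // in h1; rewrite eq eB // in h2; by rewrite -h1 -h2.
rewrite -(card_in_imset inj).
apply: (@leq_trans #|[set val e | e in [set e : ksub v k | i <= #|val e :&: S0|]]|); last first.
  by rewrite card_imset //; exact: val_inj.
apply: subset_leq_card; apply/subsetP => X.
case/imsetP => [[A B]]; rewrite !inE /= => /andP[/andP[sA /eqP cA] /andP[sB /eqP cB]] ->.
have dAB : [disjoint A & B].
  rewrite disjoints_subset; apply: subset_trans sA _; rewrite -disjoints_subset.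
  by rewrite disjoint_sym disjoints_subset.
have cU : #|A :|: B| == k.
  have := leq_card_setU A B; rewrite dAB; case=> _ /eqP ->.
  by rewrite cA cB; apply/eqP; lia.
apply/imsetP; exists (exist (fun A : {set 'I_v} => #|A| == k) _ cU) => //.
rewrite inE /= setIUl (setIidPl sA) -cA; apply: subset_leq_card; exact: subsetUl.
Qed.

End Lower.

Lemma sens_low v k i m : 0 < i -> i < k -> k + 2 <= m -> m <= v ->
  'C(m, i) * 'C(v - m, k - i) <= sens (@clique_prop v k i m).
Proof.
move=> i0 ik km mv.
have [||S0 [_ _ cS0]] := @ex_sub _ set0 [set: 'I_v] m (sub0set _).
- by rewrite cards0.
- by rewrite cardsT card_ord.
apply: leq_trans (count2 i0 ik km cS0) _.
rewrite /sens; apply: (@leq_trans (sens_at (clique_prop i m) (H0 k S0))); last first.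
  by rewrite (bigD1 (H0 k S0)) //= leq_maxl.
rewrite /sens_at.
apply: subset_leq_card; apply/subsetP => e; rewrite !inE => he.
by rewrite (H0_sens i0 ik km cS0 he) (H0_W k i cS0).
Qed.

Lemma sens_up v k i m : 0 < i -> i < k -> 4 * k < m ->
  sens (@clique_prop v k i m) * 'C(m, i) <= 'C(m, i) * 'C(m, i) * 'C(v, k - i) + 'C(v, i).
Proof.
move=> i0 ik km; rewrite /sens.
apply: (big_ind (fun x => x * 'C(m, i) <= _)) => //.
- move=> x y hx hy; rewrite /maxn; case: ifP => _ //.
- by move=> H _; apply: sens_at_up.
Qed.

Section Perm.
Variables (v k i m : nat).

Lemma ksub_mapE (s : {perm 'I_v}) (E : ksub v k) : val (ksub_map s E) = s @: val E.
Proof.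
rewrite /ksub_map insubdK //; rewrite unfold_in card_imset ?cardE //; exact: perm_inj.
Qed.

Lemma preim_im (s : {perm 'I_v}) (A : {set 'I_v}) : s @^-1: (s @: A) = A.
Proof. by apply/setP => x; rewrite inE mem_imset //; exact: perm_inj. Qed.

Lemma W_relabel (s : {perm 'I_v}) (H : hgraph v k) S :
  W i m H S -> W i m (relabel s H) (s @^-1: S).
Proof.
case/andP => cS /forallP hS; rewrite /W card_preimset ?cS /=; last exact: perm_inj.
apply/forallP => E; have := hS (ksub_map s E); rewrite ksub_mapE /relabel ffunE.
rewrite sub_imset_pre.
have -> : #|s @: val E :&: S| = #|val E :&: s @^-1: S|.
  have := @card_preimset _ s (s @: val E :&: S) (@perm_inj _ s).
  by rewrite preimsetI preim_im => <-.
by [].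
Qed.

Lemma relabelK (s : {perm 'I_v}) (H : hgraph v k) : relabel (s^-1)%g (relabel s H) = H.
Proof.
apply/ffunP => E; rewrite /relabel !ffunE; congr (H _); apply: val_inj.
rewrite !ksub_mapE -imset_comp.
rewrite (eq_imset (g := fun x : 'I_v => x)) ?imset_id // => x /=; exact: permKV.
Qed.

Lemma clique_hprop : is_hproperty (@clique_prop v k i m).
Proof.
  have fw : forall (s : {perm 'I_v}) (H : hgraph v k), clique_prop i m H -> clique_prop i m (relabel s H).
  move=> s H; rewrite !clique_propE => /existsP [S WS]; apply/existsP.
  by exists (s @^-1: S); apply: W_relabel.
move=> s H; apply/idP/idP; last exact: fw.
by move=> /(fw (s^-1)%g); rewrite relabelK.
Qed.

End Perm.

Lemma exp_mono a b e : a <= b -> a ^ e <= b ^ e.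
Proof. by case: e => [|e] h; rewrite ?expn0 // leq_exp2r. Qed.

Lemma ffact_le_exp n j : n ^_ j <= n ^ j.
Proof.
elim: j n => [|j IH] n; first by rewrite ffactn0 expn0.
rewrite ffactnS expnS leq_mul2l; apply/orP; right.
apply: leq_trans (IH _) _; apply: exp_mono; exact: leq_pred.
Qed.

Lemma bin_le_exp n j : 'C(n, j) <= n ^ j.
Proof.
apply: leq_trans (ffact_le_exp n j); rewrite -bin_ffact; apply: leq_pmulr.
exact: fact_gt0.
Qed.

Lemma exp_le_ffact m j : 2 * j <= m -> m ^ j <= 2 ^ j * m ^_ j.
Proof.
elim: j => [|j IH] h; first by rewrite expn0 ffactn0.
have h' : 2 * j <= m by lia.
rewrite ffactnSr !expnS.
have := IH h'; set X := m ^ j; set Y := m ^_ j => hXY.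
have : m <= 2 * (m - j) by lia.
move=> hm; rewrite mulnC.
apply: leq_trans (leq_mul hXY hm) _.
nia.
Qed.

Lemma exp_le_bin m j : 2 * j <= m -> m ^ j <= 2 ^ j * j`! * 'C(m, j).
Proof. by move=> h; rewrite -mulnA [j`! * _]mulnC bin_ffact exp_le_ffact. Qed.

Definition rootP n X q := (q == 0) || ((q ^ n <= X) && (q <= X)).
Lemma rootP_ex n X : exists q, rootP n X q. Proof. by exists 0. Qed.
Lemma rootP_ub n X q : rootP n X q -> q <= X.
Proof. by case/orP => [/eqP -> //|/andP[]]. Qed.
Definition iroot n X := ex_maxn (rootP_ex n X) (@rootP_ub n X).

Lemma irootP n X : 0 < n -> 0 < X ->
  [/\ 0 < iroot n X, iroot n X ^ n <= X & X < (iroot n X).+1 ^ n].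
Proof.
move=> n0 X0; rewrite /iroot; case: ex_maxnP => r Pr maxr.
have r1 : 0 < r by apply: (maxr 1); rewrite /rootP exp1n X0.
move: Pr; rewrite /rootP; case/orP => [/eqP r0|/andP[rX _]]; first by move: r1; rewrite r0.
split => //.
rewrite ltnNge; apply/negP => h.
have h2 : r.+1 <= X.
  apply: leq_trans h; have [n1 ->] : exists n1, n = n1.+1 by exists n.-1; lia.
  rewrite expnS.
  by apply: leq_pmulr; rewrite expn_gt0.
by have := maxr r.+1; rewrite /rootP h h2 orbT ltnn => /(_ isT).
Qed.

Lemma pow_lt_y (x y : R) n : (0 <= y)%R -> (y < x)%R -> (y ^ n.+1 < x ^ n.+1)%R.
Proof.
move=> y0 yx; rewrite /= .
have h1 : (y ^ n <= x ^ n)%R by apply: pow_incr; lra.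
have h2 : (0 < x ^ n)%R by apply: pow_lt; lra.
nra.
Qed.

Lemma pow_le_inv (x y : R) n : (0 <= x)%R -> (0 <= y)%R -> (0 < n)%N ->
  (x ^ n <= y ^ n)%R -> (x <= y)%R.
Proof.
move=> x0 y0; case: n => // n _ h.
destruct (Rle_or_lt x y) as [|lt] => //.
have := pow_lt_y n y0 lt; lra.
Qed.

Lemma theta_sqrt (g h : nat -> nat) (F : nat -> R) (A B N : nat) :
  (0 < A)%N -> (0 < B)%N ->
  (forall v, (N <= v)%N -> (h v <= A * (g v * g v))%N /\ (g v * g v <= B * h v)%N) ->
  (forall v, (N <= v)%N -> F v = sqrt (INR (h v))) ->
  bigTheta (fun v => INR (g v)) F.
Proof.
move=> A0 B0 hb hF.
have sA : (0 < sqrt (INR A))%R by apply: sqrt_lt_R0; apply: lt_0_INR; apply/ltP.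
have sB : (0 < sqrt (INR B))%R by apply: sqrt_lt_R0; apply: lt_0_INR; apply/ltP.
exists (/ sqrt (INR A))%R, (sqrt (INR B)), N; split; first by apply: Rinv_0_lt_compat.
split => // v Nv; rewrite hF //.
have [h1 h2] := hb v Nv.
have {}h1 := le_INR _ _ (elimT leP h1); have {}h2 := le_INR _ _ (elimT leP h2).
rewrite !mult_INR in h1 h2.
have G0 := pos_INR (g v).
have eG : sqrt (INR (g v) * INR (g v)) = INR (g v) by apply: sqrt_square.
split.
- have : (sqrt (INR (h v)) <= sqrt (INR A) * INR (g v))%R.
    rewrite -eG -sqrt_mult_alt; [exact (sqrt_le_1_alt _ _ h1)| exact (pos_INR A)].
  move=> h3.
  apply: (Rmult_le_reg_l (sqrt (INR A))) => //.
  rewrite -Rmult_assoc Rinv_r ?Rmult_1_l; lra.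
- rewrite -{1}eG -sqrt_mult_alt; [exact (sqrt_le_1_alt _ _ h2)| exact (pos_INR B)].
Qed.

Lemma Rpower_half (v k : nat) : (0 < v)%N ->
  Rpower (INR v) (INR k / 2) = sqrt (INR (v ^ k)).
Proof.
move=> v0.
have v0' : (0 < INR v)%R by apply: lt_0_INR; apply/ltP.
rewrite /Rdiv -Rpower_mult Rpower_pow // Rpower_sqrt; last by apply: pow_lt.
congr sqrt; elim: k => [|k IH]; first by rewrite expn0.
by rewrite expnS mult_INR -IH.
Qed.

Lemma sq2 X Z : (X + Z) * (X + Z) <= 2 * (X * X) + 2 * (Z * Z).
Proof.
case: (leqP Z X) => h.
- have [d ->] : exists d, X = Z + d by exists (X - Z); lia. nia.
- have [d ->] : exists d, Z = X + d by exists (Z - X); lia. nia.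
Qed.

Section Asym.
Variable k : nat.
Hypothesis k2 : 2 <= k.

Definition nn := 2 * k.-1.
Definition aa := k - 2.
Definition K0 := 4 * k + 1.
Definition pp v := iroot nn (v ^ aa).
Definition mm v := K0 * pp v.
Definition L0 := 2 ^ k.-1 * k.-1`!.

Lemma nn_gt0 : 0 < nn. Proof. rewrite /nn; lia. Qed.

Lemma eq_nn (x : nat) : x ^ nn = x ^ k.-1 * x ^ k.-1.
Proof. by rewrite /nn mul2n -addnn expnD. Qed.
Lemma eq_k (x : nat) : x ^ k = x ^ aa * (x * x).
Proof. by rewrite -[x * x]/(x ^ 2) -expnD /aa; congr (x ^ _); lia. Qed.
Lemma eq_nn2 (x : nat) : x ^ nn = x ^ aa * x ^ k.
Proof. by rewrite -expnD /aa /nn; congr (x ^ _); lia. Qed.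

Lemma ppP v : 0 < v ->
  [/\ 0 < pp v, pp v ^ nn <= v ^ aa & v ^ aa <= 2 ^ nn * pp v ^ nn].
Proof.
move=> v0; have X0 : 0 < v ^ aa by rewrite expn_gt0 v0.
have [h1 h2 h3] := irootP nn_gt0 X0.
rewrite /pp; split => //; apply: ltnW; apply: (leq_trans h3).
by rewrite -expnMn; apply: exp_mono; lia.
Qed.

Lemma mm_ge v : 0 < v -> 4 * k < mm v.
Proof. by move=> v0; have [h1 _ _] := ppP v0; rewrite /mm /K0; nia. Qed.

Definition Bu := 2 * K0 ^ nn + 2 * 2 ^ nn * (L0 * L0).

Lemma nat_upper v : 0 < v ->
  sens (@clique_prop v k k.-1 (mm v)) * sens (@clique_prop v k k.-1 (mm v)) <= Bu * v ^ k.
Proof.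
move=> v0; set s := sens _.
have [p0 hp1 hp2] := ppP v0.
have i0 : 0 < k.-1 by lia.
have ik : k.-1 < k by lia.
have hm := mm_ge v0.
have := sens_up v i0 ik hm; rewrite -/s.
have -> : k - k.-1 = 1 by lia.
rewrite bin1.
set c := 'C(mm v, k.-1); set Z := 'C(v, k.-1); set m := mm v => hs.
have c0 : 0 < c by rewrite bin_gt0; lia.
have cm : c <= m ^ k.-1 by apply: bin_le_exp.
have mc : m ^ k.-1 <= L0 * c by rewrite /L0; apply: exp_le_bin; lia.
have Zv : Z <= v ^ k.-1 by apply: bin_le_exp.
have hY : (c * v) * (c * v) <= K0 ^ nn * v ^ k.
  apply: (@leq_trans ((m ^ k.-1 * m ^ k.-1) * (v * v))).
    by rewrite mulnACA; apply: leq_mul (leq_mul cm cm) (leqnn _).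
  rewrite -eq_nn /m /mm expnMn eq_k -mulnA leq_mul2l; apply/orP; right.
  by rewrite leq_mul2r hp1 orbT.
have hZ : Z * Z <= 2 ^ nn * (L0 * L0) * v ^ k * (c * c).
  apply: (@leq_trans (v ^ nn)).
    by rewrite eq_nn; apply: leq_mul.
  rewrite eq_nn2 -mulnA [v ^ k * _]mulnC mulnA leq_mul2r; apply/orP; right.
  apply: (leq_trans hp2); rewrite -mulnA leq_mul2l; apply/orP; right.
  apply: (@leq_trans (m ^ nn)).
    by apply: exp_mono; rewrite /m /mm /K0; nia.
  by rewrite eq_nn mulnACA; apply: leq_mul.
set P := K0 ^ nn * v ^ k in hY; set Q := 2 ^ nn * (L0 * L0) * v ^ k in hZ.
have hs' : s * c <= c * (c * v) + Z by rewrite mulnA.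
move: hs' hY hZ; set Y := c * v; move=> hs' hY hZ.
have h1 : (s * c) * (s * c) <= (c * Y + Z) * (c * Y + Z) by apply: leq_mul.
have h2 : (c * Y + Z) * (c * Y + Z) <= 2 * ((c * c) * (Y * Y)) + 2 * (Z * Z).
  by rewrite -mulnACA; apply: sq2.
have h3 : (c * c) * (Y * Y) <= (c * c) * P by rewrite leq_mul2l hY orbT.
have : (s * s) * (c * c) <= (2 * P + 2 * Q) * (c * c).
  apply: (@leq_trans ((s * c) * (s * c))); first by rewrite mulnACA.
  apply: (leq_trans h1); apply: (leq_trans h2).
  move: h3 hZ; set CC := c * c; set YY := Y * Y; set ZZ := Z * Z; lia.
rewrite leq_pmul2r ?muln_gt0 ?c0 // => h.
apply: (leq_trans h); rewrite /P /Q /Bu; set V := v ^ k; set M := L0 * L0; set W := K0 ^ nn; set T := 2 ^ nn; nia.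
Qed.

Definition Al := 2 ^ nn * ((2 * L0) * (2 * L0)).
Definition Nl := (2 * K0) ^ nn.

Lemma two_m v : Nl <= v -> 2 * mm v <= v.
Proof.
move=> hv; have v0 : 0 < v by apply: leq_trans hv; rewrite expn_gt0 /K0; apply/orP; left; lia.
have [p0 hp1 hp2] := ppP v0.
rewrite -(leq_exp2r _ _ nn_gt0) /mm mulnA expnMn.
apply: (@leq_trans (Nl * v ^ aa)); first by rewrite leq_mul2l hp1 orbT.
rewrite eq_nn2 mulnC leq_mul2l; apply/orP; right.
apply: (leq_trans hv); rewrite -{1}(expn1 v); apply: leq_pexp2l => //; lia.
Qed.

Lemma nat_lower v : Nl <= v ->
  v ^ k <= Al * (sens (@clique_prop v k k.-1 (mm v)) * sens (@clique_prop v k k.-1 (mm v))).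
Proof.
move=> hv; have v0 : 0 < v by apply: leq_trans hv; rewrite expn_gt0 /K0; apply/orP; left; lia.
set s := sens _.
have [p0 hp1 hp2] := ppP v0.
have i0 : 0 < k.-1 by lia.
have ik : k.-1 < k by lia.
have hm := mm_ge v0.
have h2m := two_m hv.
have := @sens_low v k k.-1 (mm v) i0 ik ltac:(lia) ltac:(lia); rewrite -/s.
have -> : k - k.-1 = 1 by lia.
rewrite bin1.
set c := 'C(mm v, k.-1); set m := mm v => hs.
have mc : m ^ k.-1 <= L0 * c by rewrite /L0; apply: exp_le_bin; lia.
have pm : pp v <= m by rewrite /m /mm /K0; nia.
rewrite eq_k.
apply: (@leq_trans (2 ^ nn * pp v ^ nn * (v * v))); first by rewrite leq_mul2r hp2 orbT.
apply: (@leq_trans (2 ^ nn * m ^ nn * (v * v))).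
  by rewrite leq_mul2r leq_mul2l exp_mono ?orbT.
rewrite /Al -(mulnA (2 ^ nn)) -(mulnA (2 ^ nn)) leq_mul2l; apply/orP; right.
rewrite eq_nn.
have h1 : m ^ k.-1 * m ^ k.-1 <= (L0 * c) * (L0 * c) by apply: leq_mul.
have h3 : v <= 2 * (v - m) by lia.
have h4 : (L0 * c) * v <= (2 * L0) * s.
  apply: (@leq_trans ((L0 * c) * (2 * (v - m)))); first by rewrite leq_mul2l h3 orbT.
  rewrite (_ : L0 * c * (2 * (v - m)) = 2 * L0 * (c * (v - m))); last by nia.
  by rewrite leq_mul2l hs orbT.
apply: (@leq_trans ((L0 * c) * (L0 * c) * (v * v))); first by rewrite leq_mul2r h1 orbT.
rewrite mulnACA [X in _ <= X]mulnACA; exact: leq_mul.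
Qed.

End Asym.

Lemma INR_expn a n : INR (a ^ n) = (INR a ^ n)%R.
Proof. elim: n => [|n IH]; first by rewrite expn0. by rewrite expnS mult_INR IH. Qed.

Lemma INR_le a b : a <= b -> (INR a <= INR b)%R.
Proof. by move=> h; apply: le_INR; apply/leP. Qed.

Lemma theta_m k (k2 : 2 <= k) (t : R) : (t * INR (nn k) = INR (aa k))%R ->
  bigTheta (fun v => INR (mm k v)) (fun v => Rpower (INR v) t).
Proof.
move=> ht.
have K1 : (1 <= INR (K0 k))%R by rewrite -[1%R]/(INR 1); apply: INR_le; rewrite /K0; lia.
exists (/2)%R, (INR (K0 k)), 1; split; first lra; split; first lra.
move=> v v1; have v0 : 0 < v by [].
have [p0 hp1 hp2] := ppP k2 v0.
set y := Rpower (INR v) t; set p := pp k v.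
have y0 : (0 < y)%R by rewrite /y /Rpower; apply: exp_pos.
have vR : (0 < INR v)%R by apply: lt_0_INR; apply/ltP.
have yn : (y ^ nn k = INR (v ^ aa k))%R.
  by rewrite -Rpower_pow // /y Rpower_mult ht Rpower_pow // INR_expn.
have P0 := pos_INR p.
have h1 : (INR p <= y)%R.
  apply: (pow_le_inv (n := nn k)) => //; first lra; first exact: nn_gt0.
  by rewrite yn -INR_expn; apply: INR_le.
have h2 : (y <= 2 * INR p)%R.
  apply: (pow_le_inv (n := nn k)) => //; first lra; first lra; first exact: nn_gt0.
  rewrite yn -[2%R]/(INR 2) -mult_INR -INR_expn; apply: INR_le.
  change (v ^ aa k <= (2 * p) ^ nn k); by rewrite expnMn.
rewrite /mm mult_INR -/p; split; nra.
Qed.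

Lemma theta_sens k (k2 : 2 <= k) :
  bigTheta (fun v => INR (sens (@clique_prop v k k.-1 (mm k v))))
           (fun v => Rpower (INR v) (INR k / 2)).
Proof.
have N1 : 0 < Nl k by rewrite expn_gt0 /K0; apply/orP; left; lia.
apply: (@theta_sqrt _ (fun v => v ^ k) _ (Al k) (Bu k) (Nl k)).
- by rewrite /Al !muln_gt0 expn_gt0 /L0 expn_gt0 fact_gt0.
- by rewrite /Bu addn_gt0 muln_gt0 expn_gt0 /K0; apply/orP; left; lia.
- move=> v hv; split; first exact: nat_lower.
  apply: nat_upper => //; exact: leq_trans N1 hv.
- move=> v hv; apply: Rpower_half; exact: leq_trans N1 hv.
Qed.

Lemma bin_ge_exp v k : 2 * k <= v -> v ^ k <= 2 ^ k * k`! * 'C(v, k).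
Proof. exact: exp_le_bin. Qed.

Lemma theta_sens_C k (k2 : 2 <= k) :
  bigTheta (fun v => INR (sens (@clique_prop v k k.-1 (mm k v))))
           (fun v => sqrt (INR 'C(v, k))).
Proof.
have N1 : 0 < Nl k by rewrite expn_gt0 /K0; apply/orP; left; lia.
apply: (@theta_sqrt _ (fun v => 'C(v, k)) _ (Al k) (Bu k * (2 ^ k * k`!)) (Nl k + 2 * k)).
- by rewrite /Al !muln_gt0 expn_gt0 /L0 expn_gt0 fact_gt0.
- rewrite muln_gt0 muln_gt0 fact_gt0 andbT expn_gt0 orTb andbT.
  by rewrite /Bu addn_gt0 muln_gt0 expn_gt0 /K0; apply/orP; left; lia.
- move=> v hv; split.
  + apply: leq_trans (bin_le_exp v k) _; apply: nat_lower => //; lia.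
  + apply: leq_trans (nat_upper k2 (_ : 0 < v)) _; first lia.
    rewrite -mulnA leq_mul2l; apply/orP; right; apply: bin_ge_exp; lia.
- by [].
Qed.

Theorem proposition3p5 :
  (forall k : nat, (3 <= k)%nat ->
     exists (i : nat) (t : R) (m : nat -> nat),
       (1 <= i)%nat /\ (i < k)%nat /\ (0 <= t <= 1)%R /\
       (INR i * (1 - t) = INR k / 2)%R /\
       bigTheta (fun v => INR (m v)) (fun v => Rpower (INR v) t) /\
       bigTheta (fun v => INR (sens (@clique_prop v k i (m v))))
                (fun v => Rpower (INR v) (INR k / 2)))
  /\
  (forall k : nat, (2 <= k)%nat ->
     exists f : forall v : nat, hgraph v k -> bool,
       (forall v : nat, is_hproperty (f v)) /\
       bigTheta (fun v => INR (sens (f v))) (fun v => Rpower (INR v) (INR k / 2)) /\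
       bigTheta (fun v => INR (sens (f v))) (fun v => sqrt (INR 'C(v, k)))).
Proof.
split.
- move=> k k3; have k2 : 2 <= k by lia.
  have eK : INR k = (INR k.-1 + 1)%R.
    by rewrite -S_INR; congr INR; lia.
  have K2 : (2 <= INR k)%R by rewrite -[2%R]/(INR 2); apply: INR_le; lia.
  set K := INR k in eK K2 *.
  exists k.-1, (1 - K / (2 * INR k.-1))%R, (mm k).
  split; first lia. split; first lia.
  have Km : INR k.-1 = (K - 1)%R by lra.
  rewrite Km.
  split.
    have X0 : (0 <= K / (2 * (K - 1)))%R.
      apply: Rmult_le_pos; first lra; left; apply: Rinv_0_lt_compat; lra.
    have X1 : (K / (2 * (K - 1)) <= 1)%R.
      apply: (Rmult_le_reg_r (2 * (K - 1))); first lra.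
      rewrite /Rdiv Rmult_assoc Rinv_l; lra.
    lra.
  split; first by field; lra.
  split; last exact: theta_sens.
  apply: theta_m => //.
  rewrite /nn /aa mult_INR Km minus_INR; last lia.
  rewrite -/K /=; field; lra.
- move=> k k2; exists (fun v => @clique_prop v k k.-1 (mm k v)); split.
  + move=> v; exact: clique_hprop.
  split; [exact: theta_sens | exact: theta_sens_C].
Qed.
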